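(* Let $(A,\mu,\alpha,\beta)$ be a BiHom-commutative algebra (with $\mu(x\otimes y)=x\cdot y$). Let $\gamma,\lambda,\xi:A\to A$ be linear maps such that $\gamma(x\cdot y)=\gamma(x)\cdot\gamma(y)$, $\lambda(x\cdot y)=\lambda(x)\cdot\lambda(y)$ and $\xi(x\cdot y)=\xi(x)\cdot\xi(y)$ for all $x,y\in A$. Let $D:A\to A$ be a linear map, assume that any two of the maps $\alpha,\beta,\gamma,\lambda,\xi,D$ commute, and that $D(a\cdot b)=\gamma(a)\cdot D(b)+D(a)\cdot\gamma(b)$ for all $a,b\in A$. Define a new multiplication on $A$ by $a\ast b=\lambda(a)\cdot\xi D(b)$. Then $(A,\ast,\lambda\alpha,\xi\beta\gamma)$ is a BiHom-Novikov algebra.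
   Context: Work over a field. A BiHom-associative algebra is a 4-tuple $(A,\mu,\alpha,\beta)$ with $\alpha,\beta:A\to A$ linear, $\alpha\beta=\beta\alpha$, $\alpha,\beta$ multiplicative for $\mu$ (written $x\cdot y$), and $\alpha(x)\cdot(y\cdot z)=(x\cdot y)\cdot\beta(z)$ for all $x,y,z$. It is BiHom-commutative if moreover $\beta(a)\cdot\alpha(b)=\beta(b)\cdot\alpha(a)$ for all $a,b$. A BiHom-Novikov algebra is a 4-tuple $(A,\mu,\alpha,\beta)$ with commuting linear $\alpha,\beta$ such that for all $x,y,z$: $\alpha(x\cdot y)=\alpha(x)\cdot\alpha(y)$, $\beta(x\cdot y)=\beta(x)\cdot\beta(y)$, $(\beta(x)\cdot\alpha(y))\cdot\beta(z)-\alpha\beta(x)\cdot(\alpha(y)\cdot z)=(\beta(y)\cdot\alpha(x))\cdot\beta(z)-\alpha\beta(y)\cdot(\alpha(x)\cdot z)$, and $(x\cdot\beta(y))\cdot\alpha\beta(z)=(x\cdot\beta(z))\cdot\alpha\beta(y)$. *)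

(* Defs.v *)
From HB Require Import structures.
From mathcomp Require Import all_boot all_algebra.
Set Implicit Arguments. Unset Strict Implicit. Unset Printing Implicit Defensive.
Import GRing.Theory.
Local Open Scope ring_scope.

Section BiHom.
Variables (K : fieldType) (A : lmodType K).

Definition lin_map (f : A -> A) : Prop :=
  forall (c : K) (x y : A), f (c *: x + y) = c *: f x + f y.

Definition bilinear_mul (mu : A -> A -> A) : Prop :=
  (forall (c : K) (x y z : A), mu (c *: x + y) z = c *: mu x z + mu y z) /\
  (forall (c : K) (x y z : A), mu x (c *: y + z) = c *: mu x y + mu x z).

Definition multiplicative (mu : A -> A -> A) (f : A -> A) : Prop :=
  forall x y, f (mu x y) = mu (f x) (f y).

Definition commute_maps (f g : A -> A) : Prop := forall x, f (g x) = g (f x).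

Definition BiHom_associative (mu : A -> A -> A) (alpha beta : A -> A) : Prop :=
  bilinear_mul mu /\ lin_map alpha /\ lin_map beta /\
      commute_maps alpha beta /\
      multiplicative mu alpha /\ multiplicative mu beta /\
      forall x y z, mu (alpha x) (mu y z) = mu (mu x y) (beta z).

Definition BiHom_commutative (mu : A -> A -> A) (alpha beta : A -> A) : Prop :=
  BiHom_associative mu alpha beta /\
  forall a b, mu (beta a) (alpha b) = mu (beta b) (alpha a).

Definition BiHom_Novikov (mu : A -> A -> A) (alpha beta : A -> A) : Prop :=
  bilinear_mul mu /\ lin_map alpha /\ lin_map beta /\
      commute_maps alpha beta /\
      multiplicative mu alpha /\ multiplicative mu beta /\
      (forall x y z,
         mu (mu (beta x) (alpha y)) (beta z) - mu (alpha (beta x)) (mu (alpha y) z)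
         = mu (mu (beta y) (alpha x)) (beta z) - mu (alpha (beta y)) (mu (alpha x) z)) /\
      (forall x y z,
         mu (mu x (beta y)) (alpha (beta z)) = mu (mu x (beta z)) (alpha (beta y))).

(* any two maps of the list commute (nth with default id, which commutes with everything) *)
Definition pairwise_commute (l : seq (A -> A)) : Prop :=
  forall i j : nat, commute_maps (nth id l i) (nth id l j).

End BiHom.

(* Main.v *)
Require Import Defs.
From mathcomp Require Import all_boot all_algebra.
Local Open Scope ring_scope.

Lemma lin_add (K : fieldType) (A : lmodType K) (f : A -> A) :
  lin_map f -> forall x y, f (x + y) = f x + f y.
Proof. by move=> hf x y; have := hf 1 x y; rewrite !GRing.scale1r. Qed.

Theorem proposition2p7 (K : fieldType) (A : lmodType K)
  (mu : A -> A -> A) (alpha beta gamma lambda xi D : A -> A) :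
  BiHom_commutative mu alpha beta ->
  lin_map gamma -> lin_map lambda -> lin_map xi -> lin_map D ->
  multiplicative mu gamma -> multiplicative mu lambda -> multiplicative mu xi ->
  pairwise_commute [:: alpha; beta; gamma; lambda; xi; D] ->
  (forall a b, D (mu a b) = mu (gamma a) (D b) + mu (D a) (gamma b)) ->
  BiHom_Novikov (fun a b => mu (lambda a) (xi (D b)))
                (fun x => lambda (alpha x)) (fun x => xi (beta (gamma x))).
Proof.
move=> [[[mul mur] [la [lb [cab [ma [mb ass]]]]]] comm] lg ll lx lD mg ml mx hc hD.
have Ma : forall a b, alpha (mu a b) = mu (alpha a) (alpha b) := ma.
have Mb : forall a b, beta (mu a b) = mu (beta a) (beta b) := mb.
have Mg : forall a b, gamma (mu a b) = mu (gamma a) (gamma b) := mg.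
have Ml : forall a b, lambda (mu a b) = mu (lambda a) (lambda b) := ml.
have Mx : forall a b, xi (mu a b) = mu (xi a) (xi b) := mx.
have Ax := @lin_add _ _ _ lx. have Al := @lin_add _ _ _ ll. have Ag := @lin_add _ _ _ lg.
have Aa := @lin_add _ _ _ la. have Ab := @lin_add _ _ _ lb. have AD := @lin_add _ _ _ lD.
have Mul : forall a b c, mu (a + b) c = mu a c + mu b c.
  by move=> a b c; have := mul 1 a b c; rewrite !GRing.scale1r.
have Mur : forall a b c, mu c (a + b) = mu c a + mu c b.
  by move=> a b c; have := mur 1 c a b; rewrite !GRing.scale1r.
have c01 : forall x, beta (alpha x) = alpha (beta x) := fun x => esym (hc 0%N 1%N x).
have c02 : forall x, gamma (alpha x) = alpha (gamma x) := fun x => esym (hc 0%N 2%N x).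
have c03 : forall x, lambda (alpha x) = alpha (lambda x) := fun x => esym (hc 0%N 3%N x).
have c04 : forall x, xi (alpha x) = alpha (xi x) := fun x => esym (hc 0%N 4%N x).
have c05 : forall x, D (alpha x) = alpha (D x) := fun x => esym (hc 0%N 5%N x).
have c12 : forall x, gamma (beta x) = beta (gamma x) := fun x => esym (hc 1%N 2%N x).
have c13 : forall x, lambda (beta x) = beta (lambda x) := fun x => esym (hc 1%N 3%N x).
have c14 : forall x, xi (beta x) = beta (xi x) := fun x => esym (hc 1%N 4%N x).
have c15 : forall x, D (beta x) = beta (D x) := fun x => esym (hc 1%N 5%N x).
have c23 : forall x, lambda (gamma x) = gamma (lambda x) := fun x => esym (hc 2%N 3%N x).
have c24 : forall x, xi (gamma x) = gamma (xi x) := fun x => esym (hc 2%N 4%N x).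
have c25 : forall x, D (gamma x) = gamma (D x) := fun x => esym (hc 2%N 5%N x).
have c34 : forall x, xi (lambda x) = lambda (xi x) := fun x => esym (hc 3%N 4%N x).
have c35 : forall x, D (lambda x) = lambda (D x) := fun x => esym (hc 3%N 5%N x).
have c45 : forall x, D (xi x) = xi (D x) := fun x => esym (hc 4%N 5%N x).
split; [split|].
  by move=> c x y z; rewrite ll mul.
  by move=> c x y z; rewrite lD lx mur.
split; first by move=> c x y; rewrite la ll.
split; first by move=> c x y; rewrite lg lb lx.
split.
  move=> x /=.
  by repeat progress rewrite ?Ma ?Mb ?Mg ?Ml ?Mx ?hD ?Ax ?Al ?Ag ?Aa ?Ab ?AD ?Mul ?Mur
     ?c01 ?c02 ?c03 ?c04 ?c05 ?c12 ?c13 ?c14 ?c15 ?c23 ?c24 ?c25 ?c34 ?c35 ?c45.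
split.
  move=> x y /=.
  by repeat progress rewrite ?Ma ?Mb ?Mg ?Ml ?Mx ?hD ?Ax ?Al ?Ag ?Aa ?Ab ?AD ?Mul ?Mur
     ?c01 ?c02 ?c03 ?c04 ?c05 ?c12 ?c13 ?c14 ?c15 ?c23 ?c24 ?c25 ?c34 ?c35 ?c45.
split.
  move=> x y /=.
  by repeat progress rewrite ?Ma ?Mb ?Mg ?Ml ?Mx ?hD ?Ax ?Al ?Ag ?Aa ?Ab ?AD ?Mul ?Mur
     ?c01 ?c02 ?c03 ?c04 ?c05 ?c12 ?c13 ?c14 ?c15 ?c23 ?c24 ?c25 ?c34 ?c35 ?c45.
split.
  move=> x y z /=.
  have key1 : forall x y, mu (alpha (lambda (lambda (xi (beta (gamma x))))))
      (mu (lambda (xi (D (lambda (alpha y))))) (xi (D (xi (gamma z)))))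
    = mu (mu (lambda (lambda (xi (beta (gamma x))))) (lambda (xi (D (lambda (alpha y))))))
         (beta (xi (D (xi (gamma z))))).
    by move=> a b; apply: ass.
  have k1 := key1 x y. have k1' := key1 y x. clear key1.
  have key2 :
    mu (alpha (lambda (lambda (xi (beta (gamma x)))))) (mu (xi (gamma (lambda (lambda (alpha y))))) (xi (xi (D (D z)))))
    = mu (alpha (lambda (lambda (xi (beta (gamma y)))))) (mu (xi (gamma (lambda (lambda (alpha x))))) (xi (xi (D (D z))))).
    rewrite !ass. 
    have := comm (lambda (lambda (xi (gamma x)))) (xi (gamma (lambda (lambda y)))).
    repeat progress rewrite ?Ma ?Mb ?Mg ?Ml ?Mx ?hD ?Ax ?Al ?Ag ?Aa ?Ab ?AD ?Mul ?Mur
     ?c01 ?c02 ?c03 ?c04 ?c05 ?c12 ?c13 ?c14 ?c15 ?c23 ?c24 ?c25 ?c34 ?c35 ?c45.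
    move=> ->; done.
  move: k1 k1' key2.
  repeat progress rewrite ?Ma ?Mb ?Mg ?Ml ?Mx ?hD ?Ax ?Al ?Ag ?Aa ?Ab ?AD ?Mul ?Mur
     ?c01 ?c02 ?c03 ?c04 ?c05 ?c12 ?c13 ?c14 ?c15 ?c23 ?c24 ?c25 ?c34 ?c35 ?c45.
  move=> k1 k1' key2.
  rewrite -k1. rewrite -k1'. rewrite key2.
  have H : forall a b : A, a - (b + a) = - b.
    by move=> a b; rewrite GRing.opprD GRing.addrCA GRing.subrr GRing.addr0.
  by rewrite !H.
move=> x y z /=.
have key : forall P u v, mu (mu P (beta u)) (beta (alpha v)) = mu (mu P (beta v)) (beta (alpha u)).
  by move=> P u v; rewrite -!ass comm.
have := key (lambda (lambda x)) (gamma (lambda (xi (xi (D y))))) (gamma (lambda (xi (xi (D z))))).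
repeat progress rewrite ?Ma ?Mb ?Mg ?Ml ?Mx ?hD ?Ax ?Al ?Ag ?Aa ?Ab ?AD ?Mul ?Mur
     ?c01 ?c02 ?c03 ?c04 ?c05 ?c12 ?c13 ?c14 ?c15 ?c23 ?c24 ?c25 ?c34 ?c35 ?c45.
by [].
Qed.
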